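(* For real $\nu$ let $K_\nu$ denote the modified Bessel function of the second kind. The following assertions are true: (a) $u\mapsto K_{\nu}'(u)/K_{\nu}^2(u)$ is strictly decreasing on $(0,\infty)$ for all $|\nu|\geq 1$; (b) $u\mapsto K_{\nu}'(u)/K_{\nu}(u)$ is strictly increasing on $(0,\infty)$ for all $\nu\in\mathbb{R}$; (c) $u\mapsto uK_{\nu}'(u)/K_{\nu}(u)$ is strictly decreasing on $(0,\infty)$ for all $\nu\in\mathbb{R}$; (d) $u\mapsto uK_{\nu}'(u)$ is strictly increasing on $(0,\infty)$ for all $\nu\in\mathbb{R}$; (e) $u\mapsto u^2K_{\nu}'(u)$ is strictly increasing on $(0,\infty)$ for all $|\nu|\geq 5/4$; (f) $u\mapsto u^2K_{\nu}'(u)$ is strictly increasing on $(2,\infty)$ for all $\nu\in\mathbb{R}$. In particular, for all $u_1,u_2>0$ and $|\nu|\geq 1$ the following chain of inequalities holds: $$\frac{2K_{\nu}(u_1)K_{\nu}(u_2)}{K_{\nu}(u_1)+K_{\nu}(u_2)}\leq K_{\nu}\left(\frac{u_1+u_2}{2}\right)\leq \sqrt{K_{\nu}(u_1)K_{\nu}(u_2)} \leq K_{\nu}\left(\sqrt{u_1u_2}\right)\leq \frac{K_{\nu}(u_1)+K_{\nu}(u_2)}{2}.$$ Moreover, the second, third and fourth inequalities hold true for all $\nu\in\mathbb{R}$. In addition, for $|\nu|\geq 5/4$ and $u_1,u_2>0$, $$K_{\nu}\left(\frac{2u_1u_2}{u_1+u_2}\right)\leq\frac{K_{\nu}(u_1)+K_{\nu}(u_2)}{2},$$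 and this last inequality holds true for all $u_1,u_2>2$ and all $\nu\in\mathbb{R}$. In each of these inequalities equality holds if and only if $u_1=u_2$.
   Context: $K_\nu$ is the modified Bessel function of the second kind (MacDonald function), which for $u>0$, $\nu\in\mathbb{R}$ has the representation $K_{\nu}(u)=\int_0^{\infty}e^{-u\cosh t}\cosh(\nu t)\,dt>0$; equivalently $K_\nu(u)=\frac{\pi}{2}\frac{I_{-\nu}(u)-I_\nu(u)}{\sin \nu\pi}$ (limiting value for integer $\nu$), where $I_\nu$ is the modified Bessel function of the first kind. *)

(* Defs.v *)
From Stdlib Require Import Reals.
From Coquelicot Require Import Coquelicot.
Open Scope R_scope.

Definition BesselK (nu u : R) : R :=
  RInt_gen (fun t => exp (- (u * cosh t)) * cosh (nu * t))
           (at_point 0) (Rbar_locally p_infty).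

Definition dBesselK (nu u : R) : R := Derive (BesselK nu) u.

Definition strict_incr_from (a : R) (f : R -> R) : Prop :=
  forall x y, a < x -> x < y -> f x < f y.
Definition strict_decr_from (a : R) (f : R -> R) : Prop :=
  forall x y, a < x -> x < y -> f y < f x.

Definition le_eq_iff (a b u1 u2 : R) : Prop := a <= b /\ (a = b <-> u1 = u2).

(* Main.v *)
Require Import Defs.
From Coquelicot Require Import Coquelicot.
From Stdlib Require Import Reals Lra Psatz.
Open Scope R_scope.

Lemma mvt_strict (f df : R -> R) a b : a < b ->
  (forall c, a <= c <= b -> is_derive f c (df c)) ->
  exists c, a < c < b /\ f b - f a = df c * (b - a).
Proof.
  intros Hab Hd. destruct (MVT_cor2 f df a b Hab) as [c [H1 H2]].
  - intros c Hc. apply is_derive_Reals. now apply Hd.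
  - exists c; split; auto.
Qed.

Lemma incr_deriv (f df : R -> R) lo hi :
  (forall x, lo < x < hi -> is_derive f x (df x)) ->
  (forall x, lo < x < hi -> 0 < df x) ->
  forall x y, lo < x -> x < y -> y < hi -> f x < f y.
Proof.
  intros Hd Hp x y Hx Hxy Hy.
  destruct (mvt_strict f df x y Hxy) as [c [Hc Heq]].
  - intros c Hc; apply Hd; lra.
  - assert (0 < df c) by (apply Hp; lra).
    assert (0 < df c * (y - x)) by (apply Rmult_lt_0_compat; lra). lra.
Qed.

Lemma exp_ge2 t : 0 <= t -> 1 + t + t^2/2 <= exp t.
Proof.
  intros Ht. pose proof (exp_ge_taylor t 2 Ht) as H.
  simpl in H. unfold Factorial.fact in H; simpl in H. lra.
Qed.

Lemma exp_ge1 t : 1 + t <= exp t.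
Proof.
  destruct (Req_dec t 0) as [->|Hn]. rewrite exp_0; lra.
  left. now apply exp_ineq1.
Qed.

Lemma exp_le_exp x y : x <= y -> exp x <= exp y.
Proof. intros [H|H]. left; now apply exp_increasing. subst; lra. Qed.

Lemma cosh_lb t : 0 <= t -> 1 + t^2/4 <= cosh t.
Proof.
  intros Ht. unfold cosh. pose proof (exp_ge2 t Ht). pose proof (exp_ge1 (-t)).
  nra.
Qed.

Lemma cosh_pos t : 0 < cosh t.
Proof. unfold cosh. pose proof (exp_pos t); pose proof (exp_pos (-t)). lra. Qed.

Lemma cosh_ge1 t : 1 <= cosh t.
Proof.
  unfold cosh. pose proof (exp_ge1 t); pose proof (exp_ge1 (-t)).
  pose proof (exp_pos t). 
  assert (exp t * exp (-t) = 1) by (rewrite <- exp_plus; replace (t + - t) with 0 by ring; apply exp_0).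
  nra.
Qed.

Lemma cosh_le_exp x : cosh x <= exp (Rabs x).
Proof.
  unfold cosh. destruct (Rle_dec 0 x).
  - rewrite Rabs_right by lra. assert (exp (-x) <= exp x) by (apply exp_le_exp; lra). lra.
  - rewrite Rabs_left by lra. assert (exp x <= exp (-x)) by (apply exp_le_exp; lra). lra.
Qed.

Lemma sinh_le_cosh x : Rabs (sinh x) <= cosh x.
Proof.
  unfold sinh, cosh. pose proof (exp_pos x); pose proof (exp_pos (-x)).
  apply Rabs_le; lra.
Qed.

Lemma pow_exp t k : exp t ^ k = exp (INR k * t).
Proof.
  induction k. simpl. rewrite Rmult_0_l, exp_0; auto.
  rewrite S_INR. simpl. rewrite IHk, <- exp_plus. f_equal; ring.
Qed.

Lemma exp_taylor1 z : Rabs (exp z - 1) <= Rabs z * exp (Rabs z).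
Proof.
  destruct (MVT_cor4 exp exp 0 (Rabs z)) with (b := z) as [c [Hc Hc2]].
  - intros c _. apply is_derive_exp.
  - rewrite Rminus_0_r; lra.
  - rewrite exp_0 in Hc. rewrite Hc, Rminus_0_r, Rabs_mult.
    rewrite (Rabs_right (exp c)) by (left; apply exp_pos).
    rewrite !Rminus_0_r in Hc2. rewrite Rmult_comm.
    apply Rmult_le_compat_l. apply Rabs_pos.
    apply exp_le_exp. pose proof (Rle_abs c). lra.
Qed.

Lemma exp_taylor2 z : Rabs (exp z - 1 - z) <= z^2 * exp (Rabs z).
Proof.
  destruct (MVT_cor4 (fun x => exp x - 1 - x) (fun x => exp x - 1) 0 (Rabs z)) with (b := z)
    as [c [Hc Hc2]].
  - intros c _. auto_derive; auto; ring.
  - rewrite Rminus_0_r; lra.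
  - rewrite exp_0 in Hc. replace (exp z - 1 - z) with ((exp c - 1) * (z - 0)) by lra.
    rewrite !Rminus_0_r in *. rewrite Rabs_mult.
    pose proof (exp_taylor1 c).
    assert (exp (Rabs c) <= exp (Rabs z)) by (apply exp_le_exp; lra).
    assert (Rabs z ^ 2 = z^2) by (destruct (Rle_dec 0 z); [rewrite Rabs_right by lra | rewrite Rabs_left by lra]; ring).
    pose proof (Rabs_pos c); pose proof (Rabs_pos z). pose proof (exp_pos (Rabs c)).
    apply Rle_trans with (Rabs c * exp (Rabs c) * Rabs z). apply Rmult_le_compat_r; auto.
    apply Rle_trans with (Rabs z * exp (Rabs z) * Rabs z).
    apply Rmult_le_compat_r; auto. apply Rmult_le_compat; auto. lra.
    rewrite <- H1. right; ring.
Qed.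

Lemma cont_of_ex (f : R -> R) x : ex_derive f x -> continuous f x.
Proof. intros H. apply (@ex_derive_continuous R_AbsRing R_NormedModule f x H). Qed.

Lemma ex_RInt_cont (f : R -> R) a b :
  (forall z, Rmin a b <= z <= Rmax a b -> continuous f z) -> ex_RInt f a b.
Proof. intros H. apply (@ex_RInt_continuous R_CompleteNormedModule f a b H). Qed.
From Coquelicot Require Import Coquelicot.
From Stdlib Require Import Reals Lra Psatz.
Open Scope R_scope.

Definition PI_ := Rbar_locally p_infty.

Lemma gen_to_lim (f : R -> R) (a l : R) :
  is_RInt_gen f (at_point a) (Rbar_locally p_infty) l ->
  filterlim (fun b => RInt f a b) (Rbar_locally p_infty) (locally l).
Proof.
  intros H P HP. specialize (H P HP).
  destruct H as [Q R HQ HR HH].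
  unfold filtermap. apply filter_imp with (2 := HR).
  intros b Rb. destruct (HH a b HQ Rb) as [y [Hy Py]].
  simpl in Hy. rewrite (is_RInt_unique _ _ _ _ Hy). exact Py.
Qed.

Lemma lim_to_gen (f : R -> R) (a l : R) :
  (forall b, ex_RInt f a b) ->
  filterlim (fun b => RInt f a b) (Rbar_locally p_infty) (locally l) ->
  is_RInt_gen f (at_point a) (Rbar_locally p_infty) l.
Proof.
  intros Hex H P HP. unfold filtermapi.
  apply Filter_prod with (fun x => x = a) (fun b => P (RInt f a b)).
  - reflexivity.
  - apply H; exact HP.
  - intros x y Hx Hy. subst x. exists (RInt f a y). split; auto.
    simpl. exact (RInt_correct f a y (Hex y)).
Qed.

Lemma is_RInt_expn a b : is_RInt (fun t => exp (-t)) a b (exp (-a) - exp (-b)).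
Proof.
  replace (exp (-a) - exp (-b)) with (minus ((fun t => - exp (-t)) b) ((fun t => - exp(-t)) a)).
  2:{ unfold minus, plus, opp; simpl. ring. }
  apply (@is_RInt_derive R_CompleteNormedModule (fun t => - exp (-t))).
  - intros x _. auto_derive; auto. ring.
  - intros x _. apply cont_of_ex. auto_derive; auto.
Qed.

Lemma ball_R (x y e : R) : ball x e y <-> Rabs (y - x) < e.
Proof. reflexivity. Qed.

Lemma ex_gen_bound (f : R -> R) (a C : R) :
  (forall t, continuous f t) ->
  (forall t, a <= t -> 0 <= f t <= C * exp (-t)) ->
  ex_RInt_gen f (at_point a) (Rbar_locally p_infty).
Proof.
  intros Hc Hb.
  assert (Hex : forall x y, ex_RInt f x y) by (intros; apply ex_RInt_cont; auto).
  set (I := fun b => RInt f a b).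
  assert (Hmon : forall b b', a <= b -> b <= b' -> I b <= I b').
  { intros b b' H1 H2. unfold I. rewrite <- (RInt_Chasles f a b b'); auto.
    unfold plus; simpl. assert (0 <= RInt f b b'); [|lra].
    apply RInt_ge_0; auto. intros x Hx; apply Hb; lra. }
  assert (Hbd : forall b, a <= b -> I b <= C * exp (-a)).
  { intros b Hab. unfold I.
    apply Rle_trans with (RInt (fun t => C * exp (-t)) a b).
    apply RInt_le; auto. apply ex_RInt_cont. intros; apply cont_of_ex; auto_derive; auto.
    intros x Hx. apply Hb; lra.
    assert (H := is_RInt_scal _ a b C _ (is_RInt_expn a b)).
    rewrite (is_RInt_unique (fun t => C * exp (-t)) a b _ H). unfold scal; simpl; unfold mult; simpl.
    assert (0 <= C). { pose proof (Hb a (Rle_refl a)). pose proof (exp_pos (-a)). nra. }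
    pose proof (exp_pos (-b)). nra. }
  set (E := fun x => exists b, a <= b /\ x = I b).
  destruct (completeness E) as [l [Hl1 Hl2]].
  { exists (C * exp (-a)). intros x [b [Hb1 ->]]. now apply Hbd. }
  { exists (I a). exists a; split; auto; lra. }
  exists l. apply lim_to_gen; auto.
  apply filterlim_locally. intros eps.
  assert (exists b0, a <= b0 /\ l - eps < I b0) as [b0 [Hb0 Hb0']].
  { destruct (Classical_Prop.classic (exists b0, a <= b0 /\ l - eps < I b0)) as [H|H]; auto.
    exfalso. assert (l <= l - eps). apply Hl2. intros x [b [Hb1 ->]].
    destruct (Rle_dec (I b) (l - eps)); auto. exfalso; apply H; exists b; split; auto; lra.
    destruct eps; simpl in *; lra. }
  exists b0. intros b Hb1. apply ball_R.
  assert (I b0 <= I b) by (apply Hmon; lra).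
  assert (I b <= l) by (apply Hl1; exists b; split; auto; lra).
  fold (I b). apply Rabs_lt_between'. lra.
Qed.

Lemma gen_correct (f : R -> R) a : ex_RInt_gen f (at_point a) (Rbar_locally p_infty) ->
  is_RInt_gen f (at_point a) (Rbar_locally p_infty) (RInt_gen f (at_point a) (Rbar_locally p_infty)).
Proof.
  intros H. exact (@RInt_gen_correct R_CompleteNormedModule _ _
    (Proper_StrongProper _ (at_point_filter a)) (Proper_StrongProper _ (Rbar_locally_filter p_infty)) f H).
Qed.

Lemma gen_unique (f : R -> R) a l : is_RInt_gen f (at_point a) (Rbar_locally p_infty) l ->
  RInt_gen f (at_point a) (Rbar_locally p_infty) = l.
Proof.
  intros H. exact (@is_RInt_gen_unique R_CompleteNormedModule _ _
    (Proper_StrongProper _ (at_point_filter a)) (Proper_StrongProper _ (Rbar_locally_filter p_infty)) f l H).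
Qed.

Lemma gen_unique2 (f : R -> R) a l1 l2 : is_RInt_gen f (at_point a) (Rbar_locally p_infty) l1 ->
  is_RInt_gen f (at_point a) (Rbar_locally p_infty) l2 -> l1 = l2.
Proof. intros H1 H2. rewrite <- (gen_unique f a l1 H1). now apply gen_unique. Qed.

Lemma gen_plus (f g : R -> R) a lf lg :
  is_RInt_gen f (at_point a) (Rbar_locally p_infty) lf ->
  is_RInt_gen g (at_point a) (Rbar_locally p_infty) lg ->
  is_RInt_gen (fun t => f t + g t) (at_point a) (Rbar_locally p_infty) (lf + lg).
Proof. intros H1 H2. exact (is_RInt_gen_plus f g lf lg H1 H2). Qed.

Lemma gen_scal (f : R -> R) a c lf :
  is_RInt_gen f (at_point a) (Rbar_locally p_infty) lf ->
  is_RInt_gen (fun t => c * f t) (at_point a) (Rbar_locally p_infty) (c * lf).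
Proof. intros H1. exact (is_RInt_gen_scal f c lf H1). Qed.

Lemma gen_ext (f g : R -> R) a l : (forall t, f t = g t) ->
  is_RInt_gen f (at_point a) (Rbar_locally p_infty) l ->
  is_RInt_gen g (at_point a) (Rbar_locally p_infty) l.
Proof.
  intros He H. replace g with f; auto. apply FunctionalExtensionality.functional_extensionality; auto.
Qed.
From Coquelicot Require Import Coquelicot.
From Stdlib Require Import Reals Lra Psatz.
Open Scope R_scope.

Lemma exp_mul_neg x : exp x * exp (-x) = 1.
Proof. rewrite <- exp_plus. replace (x + - x) with 0 by ring. apply exp_0. Qed.

Lemma sinh2 t : sinh t ^ 2 = cosh t ^ 2 - 1.
Proof. unfold sinh, cosh. pose proof (exp_mul_neg t). nra. Qed.

Definition Fk (nu : R) (k : nat) (u t : R) : R :=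
  exp (-(u * cosh t)) * cosh (nu * t) * cosh t ^ k.

Definition Kk (nu : R) (k : nat) (u : R) : R :=
  RInt_gen (Fk nu k u) (at_point 0) (Rbar_locally p_infty).

Lemma Fk_cont nu k u t : continuous (Fk nu k u) t.
Proof. apply cont_of_ex. unfold Fk. auto_derive. auto. Qed.

Lemma Fk_pos nu k u t : 0 < Fk nu k u t.
Proof.
  unfold Fk. apply Rmult_lt_0_compat. apply Rmult_lt_0_compat. apply exp_pos. apply cosh_pos.
  apply pow_lt, cosh_pos.
Qed.

Lemma Fk_bound nu k u m t : 0 < m -> m <= u -> 0 <= t ->
  Fk nu k u t <= exp ((INR k + Rabs nu + 1)^2 / m) * exp (-t).
Proof.
  intros Hm Hmu Ht. unfold Fk.
  set (al := INR k + Rabs nu + 1).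
  assert (H1 : exp (-(u * cosh t)) <= exp (-(m * (t^2/4)))).
  { apply exp_le_exp. pose proof (cosh_lb t Ht). pose proof (cosh_ge1 t). nra. }
  assert (H2 : cosh (nu * t) <= exp (Rabs nu * t)).
  { replace (Rabs nu * t) with (Rabs (nu * t)). apply cosh_le_exp.
    rewrite Rabs_mult, (Rabs_right t); lra. }
  assert (H3 : cosh t ^ k <= exp (INR k * t)).
  { rewrite <- pow_exp. apply pow_incr. split. left; apply cosh_pos.
    pose proof (cosh_le_exp t). rewrite Rabs_right in H; lra. }
  apply Rle_trans with (exp (-(m * (t^2/4))) * exp (Rabs nu * t) * exp (INR k * t)).
  { apply Rmult_le_compat. pose proof (exp_pos (-(u * cosh t))); pose proof (cosh_pos (nu*t)); nra.
    left; apply pow_lt, cosh_pos.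
    apply Rmult_le_compat; auto. left; apply exp_pos. left; apply cosh_pos. auto. }
  rewrite <- !exp_plus. apply exp_le_exp.
  assert (0 <= al^2/m - al * t + m * t^2/4).
  { replace (al^2/m - al * t + m * t^2/4) with ((m * t / 2 - al)^2 / m) by (field; lra).
    unfold Rdiv; apply Rmult_le_pos; [apply pow2_ge_0 | left; apply Rinv_0_lt_compat; lra]. }
  assert (al * t = INR k * t + Rabs nu * t + t) by (unfold al; ring).
  fold al. lra.
Qed.

Lemma Fk_ex nu k u a : 0 < u -> 0 <= a -> ex_RInt_gen (Fk nu k u) (at_point a) (Rbar_locally p_infty).
Proof.
  intros Hu Ha. apply ex_gen_bound with (C := exp ((INR k + Rabs nu + 1)^2 / u)).
  - apply Fk_cont.
  - intros t Ht. split. left; apply Fk_pos. apply Fk_bound; lra.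
Qed.

Lemma Kk_is nu k u : 0 < u -> is_RInt_gen (Fk nu k u) (at_point 0) (Rbar_locally p_infty) (Kk nu k u).
Proof.
  intros Hu. apply gen_correct. apply Fk_ex; lra.
Qed.

Lemma prod_ev a (P : R -> R -> Prop) : (forall b, a < b -> P a b) ->
  filter_prod (at_point a) (Rbar_locally p_infty) (fun ab => P (fst ab) (snd ab)).
Proof.
  intros H. apply Filter_prod with (fun x => x = a) (fun b => a < b).
  reflexivity. exists a. auto. intros x y -> Hy. simpl. auto.
Qed.

Lemma gen_nonneg (f : R -> R) a l : (forall t, a <= t -> 0 <= f t) ->
  is_RInt_gen f (at_point a) (Rbar_locally p_infty) l -> 0 <= l.
Proof.
  intros Hf H.
  assert (norm l <= l).
  { apply (@RInt_gen_norm R_CompleteNormedModule (at_point a) (Rbar_locally p_infty) _ _ f f l l).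
    - apply (prod_ev a (fun x y => x <= y)). intros; lra.
    - apply (prod_ev a (fun x y => forall z, x <= z <= y -> norm (f z) <= f z)).
      intros b Hb z Hz. unfold norm; simpl. unfold abs; simpl. rewrite Rabs_right. lra.
      apply Rle_ge, Hf; lra.
    - auto. - auto. }
  unfold norm in H0; simpl in H0. unfold abs in H0; simpl in H0.
  pose proof (Rle_abs l). pose proof (Rabs_pos l). lra.
Qed.

Lemma Kk_pos nu k u : 0 < u -> 0 < Kk nu k u.
Proof.
  intros Hu.
  destruct (Fk_ex nu k u 1 Hu ltac:(lra)) as [l2 Hl2].
  assert (H01 : is_RInt_gen (Fk nu k u) (at_point 0) (at_point 1) (RInt (Fk nu k u) 0 1)).
  { apply is_RInt_gen_at_point. apply (@RInt_correct R_CompleteNormedModule).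
    apply ex_RInt_cont; intros; apply Fk_cont. }
  pose proof (is_RInt_gen_Chasles _ _ _ _ H01 Hl2) as H.
  unfold Kk. rewrite (gen_unique _ _ _ H).
  unfold plus; simpl.
  assert (0 < RInt (Fk nu k u) 0 1).
  { apply RInt_gt_0. lra. intros; apply Fk_pos. intros; apply Fk_cont. }
  assert (0 <= l2). { apply (gen_nonneg (Fk nu k u) 1); auto. intros; left; apply Fk_pos. }
  lra.
Qed.
From Coquelicot Require Import Coquelicot.
From Stdlib Require Import Reals Lra Psatz.
Open Scope R_scope.

Lemma deriv_of_quad (f : R -> R) x l d C : 0 < d ->
  (forall y, Rabs (y - x) <= d -> Rabs (f y - f x - l * (y - x)) <= C * (y - x)^2) ->
  is_derive f x l.
Proof.
  intros Hd H. apply is_derive_Reals. intros eps Heps.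
  assert (HC : 0 <= C).
  { specialize (H (x + d) ltac:(replace (x+d-x) with d by ring; rewrite Rabs_right; lra)).
    replace (x + d - x) with d in H by ring.
    pose proof (Rabs_pos (f (x + d) - f x - l * d)). assert (0 < d^2) by (apply pow_lt; lra).
    destruct (Rle_dec 0 C); auto. assert (0 < (-C) * d^2) by (apply Rmult_lt_0_compat; lra). lra. }
  assert (Hp : 0 < Rmin d (eps / (C + 1))).
  { apply Rmin_pos; auto. apply Rdiv_lt_0_compat; lra. }
  exists (mkposreal _ Hp). intros h Hh Hlt. simpl in Hlt.
  pose proof (Rmin_l d (eps / (C+1))). pose proof (Rmin_r d (eps / (C+1))).
  specialize (H (x + h) ltac:(replace (x+h-x) with h by ring; lra)).
  replace (x + h - x) with h in H by ring.
  replace ((f (x + h) - f x) / h - l) with ((f (x + h) - f x - l * h) / h) by (field; auto).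
  unfold Rdiv. rewrite Rabs_mult, Rabs_inv.
  assert (0 < Rabs h) by (apply Rabs_pos_lt; auto).
  apply Rle_lt_trans with (C * h^2 * / Rabs h).
  apply Rmult_le_compat_r; auto. left; apply Rinv_0_lt_compat; auto.
  replace (C * h^2 * / Rabs h) with (C * Rabs h).
  2:{ replace (h^2) with (Rabs h * Rabs h). field; lra.
      destruct (Rle_dec 0 h); [rewrite Rabs_right by lra | rewrite Rabs_left by lra]; ring. }
  assert (Rabs h * (C + 1) < eps).
  { apply Rlt_le_trans with (eps / (C + 1) * (C + 1)).
    apply Rmult_lt_compat_r; lra. right; field; lra. }
  nra.
Qed.

Lemma Fk_rem nu k u0 u t : 0 < u0 -> Rabs (u - u0) <= u0 / 2 ->
  Rabs (Fk nu k u t - Fk nu k u0 t + (u - u0) * Fk nu (S k) u0 t)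
  <= (u - u0)^2 * Fk nu (S (S k)) (u0/2) t.
Proof.
  intros Hu0 Hu. unfold Fk.
  change (cosh t ^ S k) with (cosh t * cosh t ^ k).
  change (cosh t ^ S (S k)) with (cosh t * (cosh t * cosh t ^ k)).
  set (c := cosh t). set (W := cosh (nu * t) * c ^ k).
  assert (Hc : 1 <= c) by apply cosh_ge1.
  assert (HW : 0 < W) by (unfold W; apply Rmult_lt_0_compat; [apply cosh_pos | apply pow_lt; lra]).
  set (z := - ((u - u0) * c)).
  assert (E1 : exp (-(u * c)) = exp (-(u0 * c)) * exp z).
  { rewrite <- exp_plus. f_equal. unfold z; ring. }
  replace (exp (- (u * c)) * cosh (nu * t) * c ^ k - exp (- (u0 * c)) * cosh (nu * t) * c ^ k +
     (u - u0) * (exp (- (u0 * c)) * cosh (nu * t) * (c * c ^ k)))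
    with (W * exp (-(u0 * c)) * (exp z - 1 - z)).
  2:{ rewrite E1. unfold W, z. ring. }
  rewrite Rabs_mult, Rabs_mult, (Rabs_right W), (Rabs_right (exp _)) by (left; auto; apply exp_pos).
  pose proof (exp_taylor2 z).
  assert (Hz : Rabs z <= u0 / 2 * c).
  { unfold z. rewrite Rabs_Ropp, Rabs_mult, (Rabs_right c) by lra. apply Rmult_le_compat_r; lra. }
  assert (exp (-(u0 * c)) * exp (Rabs z) <= exp (-(u0 / 2 * c))).
  { rewrite <- exp_plus. apply exp_le_exp. lra. }
  assert (Ez : z^2 = (u - u0)^2 * c^2) by (unfold z; ring).
  pose proof (exp_pos (- (u0 * c))). pose proof (exp_pos (Rabs z)).
  apply Rle_trans with (W * exp (- (u0 * c)) * (z ^ 2 * exp (Rabs z))).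
  apply Rmult_le_compat_l; auto. apply Rmult_le_pos; lra.
  replace (W * exp (- (u0 * c)) * (z ^ 2 * exp (Rabs z))) with
    (W * z^2 * (exp (- (u0 * c)) * exp (Rabs z))) by ring.
  rewrite Ez. unfold W.
  replace ((u - u0) ^ 2 * (exp (- (u0 / 2 * c)) * cosh (nu * t) * (c * (c * c ^ k)))) with
    (cosh (nu * t) * c ^ k * ((u - u0) ^ 2 * c ^ 2) * exp (- (u0 / 2 * c))) by ring.
  apply Rmult_le_compat_l; auto. fold W. apply Rmult_le_pos. lra. 
  apply Rmult_le_pos. apply pow2_ge_0. apply pow2_ge_0.
Qed.

Lemma Kk_deriv nu k u0 : 0 < u0 -> is_derive (Kk nu k) u0 (- Kk nu (S k) u0).
Proof.
  intros Hu0.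
  apply deriv_of_quad with (d := u0/2) (C := Kk nu (S (S k)) (u0/2)). lra.
  intros u Hu.
  assert (Hupos : 0 < u). { apply Rabs_le_between' in Hu. lra. }
  set (g := fun t => Fk nu k u t + (-1) * Fk nu k u0 t + (u - u0) * Fk nu (S k) u0 t).
  assert (Hg : is_RInt_gen g (at_point 0) (Rbar_locally p_infty)
       (Kk nu k u + (-1) * Kk nu k u0 + (u - u0) * Kk nu (S k) u0)).
  { apply gen_plus. apply gen_plus. apply Kk_is; lra. apply gen_scal, Kk_is; lra.
    apply gen_scal, Kk_is; lra. }
  assert (Hh : is_RInt_gen (fun t => (u - u0)^2 * Fk nu (S (S k)) (u0/2) t) (at_point 0)
        (Rbar_locally p_infty) ((u - u0)^2 * Kk nu (S (S k)) (u0/2))).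
  { apply gen_scal, Kk_is; lra. }
  assert (H := @RInt_gen_norm R_CompleteNormedModule (at_point 0) (Rbar_locally p_infty) _ _ g _ _ _ 
     (prod_ev 0 (fun x y => x <= y) ltac:(intros; lra))
     (prod_ev 0 (fun x y => forall z, x <= z <= y -> norm (g z) <= (u - u0)^2 * Fk nu (S (S k)) (u0/2) z)
        ltac:(intros b Hb z Hz; unfold g; unfold norm; simpl; unfold abs; simpl;
              replace (Fk nu k u z + -1 * Fk nu k u0 z + (u - u0) * Fk nu (S k) u0 z) with
               (Fk nu k u z - Fk nu k u0 z + (u - u0) * Fk nu (S k) u0 z) by ring;
              apply Fk_rem; lra))
     Hg Hh).
  unfold norm in H; simpl in H; unfold abs in H; simpl in H.
  replace (Kk nu k u - Kk nu k u0 - - Kk nu (S k) u0 * (u - u0)) with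
    (Kk nu k u + -1 * Kk nu k u0 + (u - u0) * Kk nu (S k) u0) by ring.
  replace (Kk nu (S (S k)) (u0 / 2) * (u - u0) ^ 2) with ((u - u0) * ((u - u0) * 1) * Kk nu (S (S k)) (u0 / 2)) by ring.
  exact H.
Qed.
From Coquelicot Require Import Coquelicot.
From Stdlib Require Import Reals Lra Psatz.
Open Scope R_scope.

Lemma lim_exp_bound (h : R -> R) D : (forall b, 0 <= b -> Rabs (h b) <= D * exp (-b)) ->
  filterlim h (Rbar_locally p_infty) (locally 0).
Proof.
  intros Hb. apply filterlim_locally. intros eps.
  assert (HD : 0 <= D). { specialize (Hb 0 (Rle_refl 0)). pose proof (Rabs_pos (h 0)).
    pose proof (exp_pos (-0)). destruct (Rle_dec 0 D); auto.
    assert (0 < (-D) * exp (-0)) by (apply Rmult_lt_0_compat; lra). lra. }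
  destruct eps as [e He]; simpl.
  set (q := e / (D + 1)). assert (Hq : 0 < q) by (unfold q; apply Rdiv_lt_0_compat; lra).
  exists (Rmax 0 (- ln q)). intros b Hbm. apply ball_R.
  pose proof (Rmax_l 0 (- ln q)); pose proof (Rmax_r 0 (- ln q)).
  rewrite Rminus_0_r. specialize (Hb b ltac:(lra)).
  assert (exp (-b) < q). { rewrite <- (exp_ln q Hq). apply exp_increasing. lra. }
  assert (D * exp (-b) <= D * q). { apply Rmult_le_compat_l; lra. }
  assert (D * q < e). { unfold q. apply Rlt_le_trans with ((D+1) * (e/(D+1))).
    apply Rmult_lt_compat_r; auto; lra. right; field; lra. }
  lra.
Qed.

Definition Hb (nu u t : R) := exp (-(u * cosh t)) * (u * sinh t * cosh (nu * t) + nu * sinh (nu * t)).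
Definition Gt (nu u t : R) := (u^2 * sinh t ^ 2 - u * cosh t - nu^2) * (exp (-(u * cosh t)) * cosh (nu * t)).

Lemma Kk_ode nu u : 0 < u -> u^2 * Kk nu 2 u = u * Kk nu 1 u + (u^2 + nu^2) * Kk nu 0 u.
Proof.
  intros Hu.
  set (L := u^2 * Kk nu 2 u + (- u^2) * Kk nu 0 u + (-u) * Kk nu 1 u + (- nu^2) * Kk nu 0 u).
  assert (HG : is_RInt_gen (Gt nu u) (at_point 0) (Rbar_locally p_infty) L).
  { eapply gen_ext. 2:{ apply gen_plus. apply gen_plus. apply gen_plus.
      apply gen_scal, Kk_is; auto. apply gen_scal, Kk_is; auto. apply gen_scal, Kk_is; auto.
      apply gen_scal, Kk_is; auto. }
    intros t. unfold Gt, Fk. rewrite sinh2. simpl. ring. }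
  assert (Hint : forall b, RInt (Gt nu u) 0 b = Hb nu u 0 - Hb nu u b).
  { intros b. apply is_RInt_unique.
    replace (Hb nu u 0 - Hb nu u b) with (minus ((fun t => - Hb nu u t) b) ((fun t => - Hb nu u t) 0)).
    2:{ unfold minus, plus, opp; simpl; ring. }
    apply (@is_RInt_derive R_CompleteNormedModule (fun t => - Hb nu u t)).
    - intros x _. unfold Hb, Gt. auto_derive; auto. ring.
    - intros x _. apply cont_of_ex. unfold Gt. auto_derive; auto. }
  assert (H0 : Hb nu u 0 = 0).
  { unfold Hb. rewrite Rmult_0_r, sinh_0. ring. }
  assert (Hlim : filterlim (fun b => RInt (Gt nu u) 0 b) (Rbar_locally p_infty) (locally 0)).
  { eapply filterlim_ext. intros b. symmetry. apply Hint.
    eapply filterlim_ext. intros b. rewrite H0. replace (0 - Hb nu u b) with (- Hb nu u b) by ring. reflexivity.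
    apply lim_exp_bound with (D := (u + Rabs nu) * exp ((INR 1 + Rabs nu + 1)^2 / u)).
    intros b Hb0. rewrite Rabs_Ropp. unfold Hb.
    pose proof (Fk_bound nu 1 u u b Hu (Rle_refl u) Hb0) as HF. unfold Fk in HF.
    replace (cosh b ^ 1) with (cosh b) in HF by ring.
    rewrite Rabs_mult, (Rabs_right (exp _)) by (left; apply exp_pos).
    assert (Rabs (u * sinh b * cosh (nu * b) + nu * sinh (nu * b)) <= (u + Rabs nu) * (cosh b * cosh (nu * b))).
    { eapply Rle_trans. apply Rabs_triang. rewrite !Rabs_mult.
      rewrite (Rabs_right u) by lra. rewrite (Rabs_right (cosh (nu*b))) by (left; apply cosh_pos).
      pose proof (sinh_le_cosh b). pose proof (sinh_le_cosh (nu * b)). pose proof (cosh_ge1 b).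
      pose proof (cosh_pos (nu * b)). pose proof (Rabs_pos nu). pose proof (Rabs_pos (sinh b)).
      pose proof (Rabs_pos (sinh (nu*b))).
      assert (u * Rabs (sinh b) * cosh (nu * b) <= u * cosh b * cosh (nu * b)).
      { apply Rmult_le_compat_r. lra. apply Rmult_le_compat_l; lra. }
      assert (Rabs nu * Rabs (sinh (nu * b)) <= Rabs nu * (cosh b * cosh (nu * b))).
      { apply Rmult_le_compat_l. lra. nra. }
      nra. }
    pose proof (exp_pos (- (u * cosh b))).
    apply Rle_trans with (exp (- (u * cosh b)) * ((u + Rabs nu) * (cosh b * cosh (nu * b)))).
    apply Rmult_le_compat_l; lra.
    replace (exp (- (u * cosh b)) * ((u + Rabs nu) * (cosh b * cosh (nu * b)))) with
      ((u + Rabs nu) * (exp (- (u * cosh b)) * cosh (nu * b) * cosh b)) by ring.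
    apply Rle_trans with ((u+Rabs nu) * (exp ((INR 1 + Rabs nu + 1)^2/u) * exp (-b))).
    apply Rmult_le_compat_l. pose proof (Rabs_pos nu); lra. exact HF. right; ring. }
  pose proof (gen_to_lim _ _ _ HG) as HL.
  assert (L = 0).
  { exact (@filterlim_locally_unique R R_AbsRing R_NormedModule _
      (Proper_StrongProper _ (Rbar_locally_filter p_infty)) _ L 0 HL Hlim). }
  unfold L in H. lra.
Qed.
From Coquelicot Require Import Coquelicot.
From Stdlib Require Import Reals Lra Psatz.
Open Scope R_scope.

Lemma cont_eps (f : R -> R) x : continuous f x ->
  forall e, 0 < e -> exists d, 0 < d /\ forall y, Rabs (y - x) < d -> Rabs (f y - f x) < e.
Proof.
  intros Hc e He. 
  destruct (proj1 (filterlim_locally f (f x)) Hc (mkposreal e He)) as [d Hd].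
  exists d. split. apply cond_pos. intros y Hy. apply Hd. exact Hy.
Qed.

Lemma mono_nonpos (f df : R -> R) x y :
  x <= y -> (forall c, x <= c <= y -> is_derive f c (df c)) -> (forall c, x < c < y -> df c <= 0) ->
  f y <= f x.
Proof.
  intros Hxy Hd Hn. destruct (Req_dec x y) as [->|Hne]. lra.
  destruct (mvt_strict f df x y) as [c [Hc He]]. lra. auto.
  assert (df c * (y - x) <= 0). { apply Rmult_le_0_r. apply Hn; lra. lra. } lra.
Qed.

Lemma stay_below (f df : R -> R) a x0 c : a < x0 ->
  (forall x, a < x -> is_derive f x (df x)) -> f x0 < c ->
  (forall x, x0 <= x -> f x < c -> df x <= 0) ->
  forall x, x0 <= x -> f x < c.
Proof.
  intros Ha Hd Hx0 Hn x1 Hx1.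
  destruct (Rlt_dec (f x1) c) as [|Hge]; auto. exfalso.
  set (E := fun x => x0 <= x /\ forall y, x0 <= y <= x -> f y < c).
  assert (Hb : bound E).
  { exists x1. intros x [Hx Hy]. destruct (Rle_dec x x1); auto. exfalso.
    specialize (Hy x1 ltac:(lra)). lra. }
  assert (HE : exists x, E x). { exists x0. split. lra. intros y Hy. replace y with x0 by lra. auto. }
  destruct (completeness E Hb HE) as [s [Hs1 Hs2]].
  assert (Hx0s : x0 <= s). { apply Hs1. destruct HE as [x Hx]. split. lra. intros y Hy. replace y with x0 by lra. auto. }
  assert (Hbefore : forall y, x0 <= y < s -> f y < c).
  { intros y Hy. destruct (Classical_Prop.classic (exists x, E x /\ y <= x)) as [[x [[_ Hx] Hyx]]|Hno].
    apply Hx; lra.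
    exfalso. assert (s <= y). apply Hs2. intros x Ex. destruct (Rle_dec x y); auto. exfalso. apply Hno. exists x. split; auto; lra. lra. }
  assert (Hcont : forall x, a < x -> continuous f x) by (intros x Hx; apply cont_of_ex; eexists; apply Hd; auto).
  assert (Hfs : c <= f s).
  { destruct (Rle_dec c (f s)) as [|Hlt]; auto. exfalso.
    destruct (cont_eps f s (Hcont s ltac:(lra)) (c - f s) ltac:(lra)) as [d [Hd0 Hdd]].
    assert (E (s + d/2)).
    { split. lra. intros y Hy. destruct (Rlt_dec y s). apply Hbefore; lra.
      assert (Rabs (f y - f s) < c - f s). apply Hdd. rewrite Rabs_right; lra.
      apply Rabs_lt_between' in H. lra. }
    pose proof (Hs1 _ H). lra. }
  assert (Hsx0 : x0 < s). { destruct (Req_dec x0 s) as [He|]; [rewrite <- He in Hfs; lra | lra]. }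
  assert (f s <= f x0).
  { apply (mono_nonpos f df x0 s). lra. intros; apply Hd; lra.
    intros y Hy. apply Hn. lra. apply Hbefore; lra. }
  lra.
Qed.

Lemma stay_above (f df : R -> R) a x0 c : a < x0 ->
  (forall x, a < x -> is_derive f x (df x)) -> c < f x0 ->
  (forall x, x0 <= x -> c < f x -> 0 <= df x) ->
  forall x, x0 <= x -> c < f x.
Proof.
  intros Ha Hd Hx0 Hn x Hx.
  assert (- f x < - c); [|lra].
  assert (Hd' : forall y, a < y -> is_derive (fun x => - f x) y (- df y)).
  { intros y Hy. apply (is_derive_opp f y (df y)). auto. }
  assert (Hn' : forall y, x0 <= y -> - f y < - c -> - df y <= 0).
  { intros y Hy Hfy. pose proof (Hn y Hy ltac:(lra)). lra. }
  exact (stay_below (fun x => - f x) (fun x => - df x) a x0 (-c) Ha Hd' ltac:(lra) Hn' x Hx).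
Qed.

Lemma deriv_min_zero (f : R -> R) l a b c : a < c < b ->
  is_derive f c l -> (forall x, a < x < b -> f c <= f x) -> l = 0.
Proof.
  intros Hc Hd Hm.
  apply is_derive_Reals in Hd.
  assert (pr : derivable_pt f c) by (exists l; exact Hd).
  rewrite <- (derive_pt_eq_0 f c l pr Hd).
  apply (deriv_minimum f a b c pr); try lra. intros x H1 H2. apply Hm; lra.
Qed.
From Coquelicot Require Import Coquelicot.
From Stdlib Require Import Reals Lra Psatz.
Open Scope R_scope.

Lemma DK nu k u : 0 < u -> Derive (fun x => Kk nu k x) u = - Kk nu (S k) u.
Proof. intros Hu. apply (is_derive_unique (fun x => Kk nu k x)). apply Kk_deriv; auto. Qed.

Lemma exK nu k u : 0 < u -> ex_derive (fun x => Kk nu k x) u.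
Proof. intros Hu. eexists. apply Kk_deriv; auto. Qed.

Lemma K2e nu u : 0 < u -> Kk nu 2 u = (u * Kk nu 1 u + (u^2 + nu^2) * Kk nu 0 u) / u^2.
Proof. intros Hu. rewrite <- Kk_ode; auto. field. lra. Qed.

Definition pp (nu u : R) := u * Kk nu 1 u / Kk nu 0 u.

Lemma K0ne nu u : 0 < u -> Kk nu 0 u <> 0.
Proof. intros Hu. pose proof (Kk_pos nu 0 u Hu). lra. Qed.

Lemma pp_pos nu u : 0 < u -> 0 < pp nu u.
Proof.
  intros Hu. unfold pp. pose proof (Kk_pos nu 0 u Hu); pose proof (Kk_pos nu 1 u Hu).
  apply Rdiv_lt_0_compat; auto. apply Rmult_lt_0_compat; auto.
Qed.

Lemma K1e nu u : 0 < u -> Kk nu 1 u = pp nu u * Kk nu 0 u / u.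
Proof. intros Hu. unfold pp. field. split; [apply K0ne; auto | lra]. Qed.

Lemma pp_deriv nu u : 0 < u -> is_derive (pp nu) u ((pp nu u ^ 2 - (u^2 + nu^2)) / u).
Proof.
  intros Hu. unfold pp. auto_derive.
  - repeat split; try apply exK; auto. apply K0ne; auto.
  - rewrite !DK by auto. rewrite K2e by auto. field. split; [apply K0ne; auto | lra].
Qed.

Lemma sqrt_deriv nu x : 0 < x -> is_derive (fun x => sqrt (x^2 + nu^2)) x (x / sqrt (x^2 + nu^2)).
Proof.
  intros Hx. assert (0 < x^2 + nu^2) by nra.
  auto_derive. nra. replace (x * (x * 1) + nu * (nu * 1)) with (x^2 + nu^2) by ring.
  pose proof (sqrt_lt_R0 _ H). field. lra.
Qed.

Lemma pp_lower nu u : 0 < u -> sqrt (u^2 + nu^2) < pp nu u.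
Proof.
  assert (weak : forall u0, 0 < u0 -> sqrt (u0^2 + nu^2) <= pp nu u0).
  { intros u0 Hu0. destruct (Rle_dec (sqrt (u0^2 + nu^2)) (pp nu u0)) as [|Hlt]; auto.
    exfalso. apply Rnot_le_lt in Hlt. set (c := sqrt (u0^2 + nu^2)).
    assert (Hd : forall x, 0 < x -> is_derive (pp nu) x ((fun x => (pp nu x ^ 2 - (x^2 + nu^2)) / x) x)).
    { intros; apply pp_deriv; auto. }
    assert (Hneg : forall x, u0 <= x -> pp nu x < c -> (pp nu x ^ 2 - (x^2 + nu^2)) / x < 0).
    { intros x Hx Hpx. assert (c <= sqrt (x^2 + nu^2)). { apply sqrt_le_1; nra. }
      pose proof (pp_pos nu x ltac:(lra)).
      assert (pp nu x ^2 < sqrt (x^2+nu^2) ^2) by nra.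
      rewrite pow2_sqrt in H1 by nra.
      apply Rdiv_neg_pos; lra. }
    assert (below : forall x, u0 <= x -> pp nu x < c).
    { apply (stay_below (pp nu) _ 0 u0 c Hu0 Hd). exact Hlt.
      intros x Hx Hpx. left; apply Hneg; auto. }
    set (P := pp nu u0).
    assert (Hle : forall x, u0 <= x -> pp nu x <= P).
    { intros x Hx. apply (mono_nonpos (pp nu) (fun x => (pp nu x ^ 2 - (x^2 + nu^2)) / x) u0 x Hx). intros; apply Hd; lra.
      intros y Hy. left. apply Hneg. lra. apply below; lra. }
    assert (HP : 0 < P) by (apply pp_pos; auto).
    set (U0 := u0 + P + 1). set (U1 := U0 + P + 1).
    destruct (mvt_strict (pp nu) (fun x => (pp nu x ^ 2 - (x^2 + nu^2)) / x) U0 U1 ltac:(unfold U1; lra)) as [xi [Hxi Heq]].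
    { intros; apply Hd; unfold U0 in *; lra. }
    assert (Hx1 : 0 < pp nu xi <= P). { split. apply pp_pos; unfold U0 in *; lra. apply Hle; unfold U0 in *; lra. }
    assert (Hxi1 : P + 1 <= xi) by (unfold U0 in *; lra).
    assert ((pp nu xi ^ 2 - (xi ^ 2 + nu ^ 2)) / xi <= -1).
    { apply (Rmult_le_reg_r xi). lra. unfold Rdiv. rewrite Rmult_assoc, Rinv_l by lra.
      nra. }
    assert (pp nu U1 - pp nu U0 <= - (P + 1)).
    { rewrite Heq. replace (U1 - U0) with (P + 1) by (unfold U1; ring). nra. }
    pose proof (pp_pos nu U1 ltac:(unfold U1, U0; lra)).
    pose proof (Hle U0 ltac:(unfold U0; lra)). lra. }
  intros Hu. destruct (weak u Hu) as [|Heq]; auto. exfalso.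
  assert (Hdh : is_derive (fun x => pp nu x - sqrt (x^2 + nu^2)) u
            ((pp nu u ^ 2 - (u^2 + nu^2)) / u - u / sqrt (u^2 + nu^2))).
  { apply (is_derive_minus (pp nu) (fun x => sqrt (x^2 + nu^2))). apply pp_deriv; auto. apply sqrt_deriv; auto. }
  pose proof (deriv_min_zero _ _ (u/2) (u+1) u ltac:(lra) Hdh) as Hz.
  assert (0 < u^2 + nu^2) by nra.
  assert (Hs : 0 < sqrt (u^2 + nu^2)) by (apply sqrt_lt_R0; auto).
  assert (pp nu u ^ 2 = u^2 + nu^2) by (rewrite <- Heq; apply pow2_sqrt; lra).
  assert (0 < u / sqrt (u^2+nu^2)) by (apply Rdiv_lt_0_compat; lra).
  rewrite H0 in Hz. replace ((u ^ 2 + nu ^ 2 - (u ^ 2 + nu ^ 2)) / u) with 0 in Hz by (field; lra).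
  enough (0 - u / sqrt (u ^ 2 + nu ^ 2) = 0) by lra.
  apply Hz. intros x Hx. rewrite <- Heq. replace (sqrt (u ^ 2 + nu ^ 2) - sqrt (u ^ 2 + nu ^ 2)) with 0 by ring.
  pose proof (weak x ltac:(lra)). lra.
Qed.
From Coquelicot Require Import Coquelicot.
From Stdlib Require Import Reals Lra Psatz.
Open Scope R_scope.

Lemma pp_upper nu a (s ds : R -> R) : 0 <= a ->
  (forall x, a < x -> is_derive s x (ds x)) ->
  (forall x, a < x -> 0 <= s x) ->
  (forall x, a < x -> ds x < (s x ^ 2 - (x^2 + nu^2)) / x) ->
  forall u, a < u -> pp nu u < s u.
Proof.
  intros Ha Hs Hs0 Hsup.
  set (dp := fun x => (pp nu x ^ 2 - (x^2 + nu^2)) / x).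
  assert (Hdp : forall x, 0 < x -> is_derive (pp nu) x (dp x)) by (intros; apply pp_deriv; auto).
  assert (weak : forall u0, a < u0 -> pp nu u0 <= s u0).
  { intros u0 Hu0. destruct (Rle_dec (pp nu u0) (s u0)) as [|Hlt]; auto. exfalso.
    apply Rnot_le_lt in Hlt.
    set (g := fun x => pp nu x - s x). set (dg := fun x => dp x - ds x).
    assert (Hdg : forall x, a < x -> is_derive g x (dg x)).
    { intros x Hx. apply (is_derive_minus (pp nu) s). apply Hdp; lra. apply Hs; lra. }
    assert (Hgrow : forall x, a < x -> 0 < g x -> g x ^ 2 / x <= dg x).
    { intros x Hx Hgx. unfold g, dg, dp in *. specialize (Hsup x Hx). specialize (Hs0 x Hx).
      assert ((pp nu x - s x)^2 <= pp nu x ^ 2 - s x ^2) by nra.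
      assert ((pp nu x - s x)^2 / x <= (pp nu x ^ 2 - s x ^2) / x).
      { unfold Rdiv; apply Rmult_le_compat_r; auto. left; apply Rinv_0_lt_compat; lra. }
      assert ((pp nu x ^ 2 - s x ^2) / x = (pp nu x ^ 2 - (x ^ 2 + nu ^ 2)) / x - (s x ^ 2 - (x ^ 2 + nu ^ 2)) / x)
        by (field; lra).
      lra. }
    assert (Hpos : forall x, u0 <= x -> 0 < g x).
    { apply (stay_above g dg a u0 0 Hu0 Hdg). unfold g; lra.
      intros x Hx Hgx. pose proof (Hgrow x ltac:(lra) Hgx).
      assert (0 <= g x ^ 2 / x). { unfold Rdiv; apply Rmult_le_pos. apply pow2_ge_0. left; apply Rinv_0_lt_compat; lra. }
      lra. }
    set (phi := fun x => / g x + ln x).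
    set (dphi := fun x => - dg x / (g x)^2 + / x).
    assert (Hdphi : forall x, u0 <= x -> is_derive phi x (dphi x)).
    { intros x Hx. unfold phi, dphi. apply (is_derive_plus (fun x => / g x) ln).
      pose proof (Hpos x Hx).
      replace (- dg x / g x ^ 2) with (- dg x / (g x ^ 2)) by reflexivity.
      apply (is_derive_inv g x (dg x)). apply Hdg; lra. lra.
      apply is_derive_ln. lra. }
    assert (Hdphin : forall x, u0 <= x -> dphi x <= 0).
    { intros x Hx. unfold dphi. pose proof (Hpos x Hx). pose proof (Hgrow x ltac:(lra) H).
      assert (0 < g x ^ 2) by (apply pow_lt; lra).
      assert (g x ^ 2 / x / g x ^2 <= dg x / g x ^ 2).
      { unfold Rdiv at 2 3. apply Rmult_le_compat_r; auto. left; apply Rinv_0_lt_compat; lra. }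
      replace (g x ^ 2 / x / g x ^ 2) with (/ x) in H2 by (field; split; intro; lra).
      unfold Rdiv in *. lra. }
    set (U := u0 * exp (/ g u0 + 1)).
    pose proof (Hpos u0 (Rle_refl _)) as Hg0.
    assert (HU : u0 < U).
    { unfold U. assert (1 < exp (/ g u0 + 1)).
      { rewrite <- exp_0 at 1. apply exp_increasing. pose proof (Rinv_0_lt_compat _ Hg0). lra. }
      nra. }
    assert (phi U <= phi u0).
    { apply (mono_nonpos phi dphi u0 U). lra. intros; apply Hdphi; lra. intros; apply Hdphin; lra. }
    unfold phi in H. unfold U in H at 2. rewrite ln_mult, ln_exp in H by (try apply exp_pos; lra).
    pose proof (Hpos U ltac:(lra)). pose proof (Rinv_0_lt_compat _ H0). lra. }
  intros u Hu. destruct (weak u Hu) as [|Heq]; auto. exfalso.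
  assert (Hdh : is_derive (fun x => s x - pp nu x) u (ds u - dp u)).
  { apply (is_derive_minus s (pp nu)). apply Hs; lra. apply Hdp; lra. }
  pose proof (deriv_min_zero _ _ ((a+u)/2) (u+1) u ltac:(lra) Hdh) as Hz.
  assert (ds u - dp u = 0).
  { apply Hz. intros x Hx. rewrite Heq. replace (s u - s u) with 0 by ring.
    pose proof (weak x ltac:(lra)). lra. }
  specialize (Hsup u Hu). unfold dp in H. rewrite Heq in H. lra.
Qed.
From Coquelicot Require Import Coquelicot.
From Stdlib Require Import Reals Lra Psatz.
Open Scope R_scope.

Lemma BK_fun nu : BesselK nu = Kk nu 0.
Proof.
  apply FunctionalExtensionality.functional_extensionality. intros u.
  unfold BesselK, Kk, Fk. f_equal. apply FunctionalExtensionality.functional_extensionality.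
  intros t. simpl. ring.
Qed.

Lemma BK_eq nu u : BesselK nu u = Kk nu 0 u.
Proof. now rewrite BK_fun. Qed.

Lemma dBK_eq nu u : 0 < u -> dBesselK nu u = - Kk nu 1 u.
Proof. intros Hu. unfold dBesselK. rewrite BK_fun. apply is_derive_unique, Kk_deriv; auto. Qed.

Lemma sif (f g dg : R -> R) a : (forall x, a < x -> f x = g x) ->
  (forall x, a < x -> is_derive g x (dg x)) -> (forall x, a < x -> 0 < dg x) -> strict_incr_from a f.
Proof.
  intros He Hd Hp x y Hx Hxy. rewrite !He by lra.
  apply (incr_deriv g dg a (y + 1)); auto; try lra.
  intros; apply Hd; lra. intros; apply Hp; lra.
Qed.

Lemma sdf (f g dg : R -> R) a : (forall x, a < x -> f x = g x) ->
  (forall x, a < x -> is_derive g x (dg x)) -> (forall x, a < x -> dg x < 0) -> strict_decr_from a f.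
Proof.
  intros He Hd Hp x y Hx Hxy. rewrite !He by lra.
  assert (- g x < - g y); [|lra].
  apply (incr_deriv (fun x => - g x) (fun x => - dg x) a (y + 1)); auto; try lra.
  intros; apply (is_derive_opp g); apply Hd; lra. intros z Hz; pose proof (Hp z ltac:(lra)); lra.
Qed.

Ltac kder := auto_derive; [repeat split; try apply exK; auto; try apply K0ne; auto; try lra; try (rewrite Rmult_1_r; apply Rmult_integral_contrapositive_currified; apply K0ne; auto)
  | rewrite ?DK by auto; rewrite ?K2e by auto; unfold pp; field; repeat split; try apply K0ne; auto; try lra].

Lemma ga_der nu u : 0 < u -> is_derive (fun u => - Kk nu 1 u / Kk nu 0 u ^ 2) u
   ((pp nu u + (u^2 + nu^2) - 2 * pp nu u ^ 2) / (u^2 * Kk nu 0 u)).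
Proof. intros Hu. kder. Qed.

Lemma gb_der nu u : 0 < u -> is_derive (fun u => - Kk nu 1 u / Kk nu 0 u) u
   (((u^2 + nu^2) + pp nu u - pp nu u ^ 2) / u^2).
Proof. intros Hu. kder. Qed.

Lemma gc_der nu u : 0 < u -> is_derive (fun u => u * (- Kk nu 1 u) / Kk nu 0 u) u
   (((u^2 + nu^2) - pp nu u ^ 2) / u).
Proof. intros Hu. kder. Qed.

Lemma gd_der nu u : 0 < u -> is_derive (fun u => u * (- Kk nu 1 u)) u
   ((u^2 + nu^2) * Kk nu 0 u / u).
Proof. intros Hu. kder. Qed.

Lemma ge_der nu u : 0 < u -> is_derive (fun u => u^2 * (- Kk nu 1 u)) u
   (Kk nu 0 u * ((u^2 + nu^2) - pp nu u)).
Proof. intros Hu. kder. Qed.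
From Coquelicot Require Import Coquelicot.
From Stdlib Require Import Reals Lra Psatz.
Open Scope R_scope.

Lemma nu2_abs nu : nu ^ 2 = Rabs nu ^ 2.
Proof. destruct (Rle_dec 0 nu); [rewrite Rabs_right by lra | rewrite Rabs_left by lra]; ring. Qed.

Lemma pp_gt nu u : 0 < u -> pp nu u ^ 2 > u^2 + nu^2.
Proof.
  intros Hu. pose proof (pp_lower nu u Hu). assert (0 < u^2+nu^2) by nra.
  pose proof (sqrt_lt_R0 _ H0). pose proof (pow2_sqrt (u^2+nu^2) ltac:(lra)). nra.
Qed.

Lemma aux_b x S : 0 < x -> x < S -> x / S < (1/2 + S) / x.
Proof.
  intros Hx HS. assert (x / S < 1).
  { unfold Rdiv. apply (Rmult_lt_reg_r S). lra. rewrite Rmult_assoc, Rinv_l by lra. lra. }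
  assert (1 < (1/2 + S) / x).
  { unfold Rdiv. apply (Rmult_lt_reg_r x). lra. rewrite Rmult_assoc, Rinv_l by lra. lra. }
  lra.
Qed.

Lemma pp_lt_b nu u : 0 < u -> pp nu u ^ 2 - pp nu u < u^2 + nu^2.
Proof.
  intros Hu.
  assert (H := pp_upper nu 0 (fun x => 1/2 + sqrt (1/4 + (x^2 + nu^2)))
                 (fun x => x / sqrt (1/4 + (x^2 + nu^2))) (Rle_refl 0)).
  assert (Hq : forall x, 0 < 1/4 + (x^2 + nu^2)) by (intros; nra).
  assert (Hsq : forall x, 0 < sqrt (1/4 + (x^2 + nu^2))) by (intros; apply sqrt_lt_R0; auto).
  assert (Hsq2 : forall x, sqrt (1/4 + (x^2 + nu^2)) ^ 2 = 1/4 + (x^2 + nu^2)) by (intros; apply pow2_sqrt; left; auto).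
  specialize (H ltac:(intros x Hx; specialize (Hq x); specialize (Hsq x); auto_derive; [nra | ];
       replace (x * (x * 1) + nu * (nu * 1)) with (x^2 + nu^2) by ring; field; lra)).
  specialize (H ltac:(intros x Hx; specialize (Hsq x); lra)).
  specialize (H ltac:(intros x Hx; cbv beta; specialize (Hsq x); specialize (Hsq2 x);
     set (S := sqrt (1 / 4 + (x ^ 2 + nu ^ 2))) in *;
     replace ((1/2 + S)^2 - (x^2 + nu^2)) with (1/2 + S) by nra;
     assert (x < S) by nra; apply aux_b; lra)).
  specialize (H u Hu). cbv beta in H. pose proof (Hsq u). pose proof (Hsq2 u). pose proof (pp_pos nu u Hu).
  set (S := sqrt (1 / 4 + (u ^ 2 + nu ^ 2))) in *. set (P := pp nu u) in *.
  assert (0 < u^2) by nra. assert (1/2 < S) by nra.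
  assert (0 < (S - (P - 1/2)) * (S + (P - 1/2))) by (apply Rmult_lt_0_compat; lra).
  nra.
Qed.

Lemma part_a nu : 1 <= Rabs nu -> strict_decr_from 0 (fun u => dBesselK nu u / (BesselK nu u) ^ 2).
Proof.
  intros Hnu. eapply (sdf _ (fun u => - Kk nu 1 u / Kk nu 0 u ^ 2) _ 0).
  intros u Hu; rewrite dBK_eq, BK_eq by auto; reflexivity.
  intros u Hu; apply ga_der; auto.
  intros u Hu. pose proof (pp_gt nu u Hu). pose proof (pp_lower nu u Hu).
  assert (1 <= nu^2) by (rewrite nu2_abs; nra).
  assert (1 < sqrt (u^2 + nu^2)). { rewrite <- sqrt_1. apply sqrt_lt_1; nra. }
  assert (0 < u^2 * Kk nu 0 u) by (apply Rmult_lt_0_compat; [apply pow_lt; lra | apply Kk_pos; lra]).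
  apply Rdiv_neg_pos; auto. nra.
Qed.

Lemma part_b nu : strict_incr_from 0 (fun u => dBesselK nu u / BesselK nu u).
Proof.
  eapply (sif _ (fun u => - Kk nu 1 u / Kk nu 0 u) _ 0).
  intros u Hu; rewrite dBK_eq, BK_eq by auto; reflexivity.
  intros u Hu; apply gb_der; auto.
  intros u Hu. pose proof (pp_lt_b nu u Hu). apply Rdiv_lt_0_compat. lra. nra.
Qed.

Lemma part_c nu : strict_decr_from 0 (fun u => u * dBesselK nu u / BesselK nu u).
Proof.
  eapply (sdf _ (fun u => u * (- Kk nu 1 u) / Kk nu 0 u) _ 0).
  intros u Hu; rewrite dBK_eq, BK_eq by auto; reflexivity.
  intros u Hu; apply gc_der; auto.
  intros u Hu. pose proof (pp_gt nu u Hu). apply Rdiv_neg_pos; lra.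
Qed.

Lemma part_d nu : strict_incr_from 0 (fun u => u * dBesselK nu u).
Proof.
  eapply (sif _ (fun u => u * (- Kk nu 1 u)) _ 0).
  intros u Hu; rewrite dBK_eq by auto; reflexivity.
  intros u Hu; apply gd_der; auto.
  intros u Hu. pose proof (Kk_pos nu 0 u Hu). apply Rdiv_lt_0_compat; auto.
  apply Rmult_lt_0_compat; nra.
Qed.

Lemma pp_lt_r2 nu a : 0 <= a ->
  (forall x, a < x -> 2 * x^2 < (x^2+nu^2)^2 - (x^2 + nu^2)) ->
  forall u, a < u -> pp nu u < u^2 + nu^2.
Proof.
  intros Ha Hc. apply (pp_upper nu a (fun x => x^2 + nu^2) (fun x => 2 * x)); auto.
  - intros x Hx. auto_derive; auto. ring.
  - intros x Hx. nra.
  - intros x Hx. cbv beta. specialize (Hc x Hx). apply (Rmult_lt_reg_r x). lra.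
    replace (((x^2+nu^2)^2 - (x^2+nu^2)) / x * x) with ((x^2+nu^2)^2 - (x^2+nu^2)) by (field; apply Rgt_not_eq; lra).
    nra.
Qed.

Lemma part_ef nu a : 0 <= a ->
  (forall x, a < x -> 2 * x^2 < (x^2+nu^2)^2 - (x^2 + nu^2)) ->
  strict_incr_from a (fun u => u ^ 2 * dBesselK nu u).
Proof.
  intros Ha Hc.
  eapply (sif _ (fun u => u^2 * (- Kk nu 1 u)) _ a).
  intros u Hu; rewrite dBK_eq by lra; reflexivity.
  intros u Hu; apply ge_der; lra.
  intros u Hu. pose proof (Kk_pos nu 0 u ltac:(lra)). pose proof (pp_lt_r2 nu a Ha Hc u Hu).
  apply Rmult_lt_0_compat; lra.
Qed.

Lemma cond_e nu : 5/4 <= Rabs nu -> forall x, 0 < x -> 2 * x^2 < (x^2+nu^2)^2 - (x^2 + nu^2).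
Proof.
  intros Hnu x Hx. assert (25/16 <= nu^2) by (rewrite nu2_abs; nra).
  assert (0 < x^2) by nra. nra.
Qed.

Lemma cond_f nu : forall x, 2 < x -> 2 * x^2 < (x^2+nu^2)^2 - (x^2 + nu^2).
Proof.
  intros x Hx. assert (4 < x^2) by nra. assert (0 <= nu^2) by nra. nra.
Qed.

Lemma part_e nu : 5 / 4 <= Rabs nu -> strict_incr_from 0 (fun u => u ^ 2 * dBesselK nu u).
Proof. intros H. apply part_ef. lra. apply cond_e; auto. Qed.

Lemma part_f nu : strict_incr_from 2 (fun u => u ^ 2 * dBesselK nu u).
Proof. apply part_ef. lra. apply cond_f. Qed.
From Coquelicot Require Import Coquelicot.
From Stdlib Require Import Reals Lra Psatz.
Open Scope R_scope.

Lemma midconv_lt (phi dphi : R -> R) lo hi a b : lo < a -> b < hi -> a < b ->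
  (forall x, lo < x < hi -> is_derive phi x (dphi x)) ->
  (forall x y, lo < x -> x < y -> y < hi -> dphi x < dphi y) ->
  phi ((a + b) / 2) < (phi a + phi b) / 2.
Proof.
  intros Ha Hb Hab Hd Hi. set (m := (a + b) / 2).
  destruct (mvt_strict phi dphi a m) as [c1 [Hc1 E1]]. unfold m; lra.
  { intros; apply Hd; unfold m in *; lra. }
  destruct (mvt_strict phi dphi m b) as [c2 [Hc2 E2]]. unfold m; lra.
  { intros; apply Hd; unfold m in *; lra. }
  assert (dphi c1 < dphi c2) by (apply Hi; lra).
  assert (m - a = b - m) by (unfold m; field). assert (0 < b - m) by (unfold m; lra).
  assert (dphi c1 * (m - a) < dphi c2 * (b - m)). { rewrite H0. apply Rmult_lt_compat_r; auto. }
  lra.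
Qed.

Lemma midconv (phi dphi : R -> R) lo hi a b : lo < a < hi -> lo < b < hi -> a <> b ->
  (forall x, lo < x < hi -> is_derive phi x (dphi x)) ->
  (forall x y, lo < x -> x < y -> y < hi -> dphi x < dphi y) ->
  phi ((a + b) / 2) < (phi a + phi b) / 2.
Proof.
  intros Ha Hb Hne Hd Hi. destruct (Rlt_or_le a b).
  - apply (midconv_lt phi dphi lo hi); auto; lra.
  - replace ((a+b)/2) with ((b+a)/2) by field. replace ((phi a + phi b)/2) with ((phi b + phi a)/2) by field.
    apply (midconv_lt phi dphi lo hi); auto; try lra.
Qed.

Lemma le_eq_of X Y (u1 u2 : R) : (u1 <> u2 -> X < Y) -> (u1 = u2 -> X = Y) -> le_eq_iff X Y u1 u2.
Proof.
  intros H1 H2. split.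
  - destruct (Req_dec u1 u2); [right; auto | left; auto].
  - split; auto. intros HXY. destruct (Req_dec u1 u2); auto. specialize (H1 H). lra.
Qed.

Lemma K0p nu u : 0 < u -> 0 < Kk nu 0 u.
Proof. apply Kk_pos. Qed.

Lemma ineq1 nu u1 u2 : 1 <= Rabs nu -> 0 < u1 -> 0 < u2 ->
  le_eq_iff (2 * BesselK nu u1 * BesselK nu u2 / (BesselK nu u1 + BesselK nu u2))
            (BesselK nu ((u1 + u2) / 2)) u1 u2.
Proof.
  intros Hnu H1 H2. rewrite !BK_fun.
  pose proof (K0p nu u1 H1). pose proof (K0p nu u2 H2).
  apply le_eq_of.
  - intros Hne.
    assert (Hm : / Kk nu 0 ((u1 + u2) / 2) < (/ Kk nu 0 u1 + / Kk nu 0 u2) / 2).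
    { apply (midconv (fun x => / Kk nu 0 x) (fun x => Kk nu 1 x / Kk nu 0 x ^ 2) 0 (u1 + u2 + 1)); try lra; auto.
      - intros x Hx. auto_derive. repeat split; try apply exK; try apply K0ne; lra.
        rewrite DK by lra. field. apply K0ne; lra.
      - intros x y Hx Hxy Hy. pose proof (part_a nu Hnu x y Hx Hxy).
        cbv beta in *; rewrite !dBK_eq, !BK_eq in H3 by lra.
        replace (Kk nu 1 x / Kk nu 0 x ^ 2) with (- (- Kk nu 1 x / Kk nu 0 x ^ 2)) by (unfold Rdiv; ring).
        replace (Kk nu 1 y / Kk nu 0 y ^ 2) with (- (- Kk nu 1 y / Kk nu 0 y ^ 2)) by (unfold Rdiv; ring).
        lra. }
    set (M := Kk nu 0 ((u1 + u2) / 2)) in *.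
    assert (0 < M) by (apply K0p; lra).
    set (A := Kk nu 0 u1) in *. set (B := Kk nu 0 u2) in *.
    replace ((/ A + / B) / 2) with (/ (2 * A * B / (A + B))) in Hm by (field; lra).
    assert (0 < 2 * A * B / (A + B)) by (apply Rdiv_lt_0_compat; nra).
    rewrite <- (Rinv_inv M), <- (Rinv_inv (2 * A * B / (A + B))).
    apply Rinv_lt_contravar. 2: exact Hm.
    apply Rmult_lt_0_compat; apply Rinv_0_lt_compat; auto.
  - intros <-. replace ((u1 + u1) / 2) with u1 by field. field. lra.
Qed.

Lemma ineq2 nu u1 u2 : 0 < u1 -> 0 < u2 ->
  le_eq_iff (BesselK nu ((u1 + u2) / 2)) (sqrt (BesselK nu u1 * BesselK nu u2)) u1 u2.
Proof.
  intros H1 H2. rewrite !BK_fun.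
  pose proof (K0p nu u1 H1). pose proof (K0p nu u2 H2).
  apply le_eq_of.
  - intros Hne.
    assert (Hm : ln (Kk nu 0 ((u1 + u2) / 2)) < (ln (Kk nu 0 u1) + ln (Kk nu 0 u2)) / 2).
    { apply (midconv (fun x => ln (Kk nu 0 x)) (fun x => - Kk nu 1 x / Kk nu 0 x) 0 (u1 + u2 + 1)); try lra; auto.
      - intros x Hx. auto_derive. repeat split; try apply exK; try apply K0p; lra.
        rewrite DK by lra. field. apply K0ne; lra.
      - intros x y Hx Hxy Hy. pose proof (part_b nu x y Hx Hxy).
        cbv beta in *; rewrite !dBK_eq, !BK_eq in H3 by lra. exact H3. }
    set (M := Kk nu 0 ((u1 + u2) / 2)) in *.
    assert (0 < M) by (apply K0p; lra).
    set (A := Kk nu 0 u1) in *. set (B := Kk nu 0 u2) in *.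
    assert (M * M < A * B).
    { apply ln_lt_inv. nra. nra. rewrite !ln_mult by lra. lra. }
    rewrite <- (sqrt_square M) by lra. apply sqrt_lt_1; nra.
  - intros <-. replace ((u1 + u1) / 2) with u1 by field. rewrite sqrt_square; lra.
Qed.

Lemma expmid u1 u2 : 0 < u1 -> 0 < u2 -> exp ((ln u1 + ln u2) / 2) = sqrt (u1 * u2).
Proof.
  intros H1 H2. symmetry. apply sqrt_lem_1. nra. left; apply exp_pos.
  rewrite <- exp_plus. replace ((ln u1 + ln u2) / 2 + (ln u1 + ln u2) / 2) with (ln u1 + ln u2) by field.
  rewrite exp_plus, !exp_ln; auto.
Qed.

Lemma ln_ne u1 u2 : 0 < u1 -> 0 < u2 -> u1 <> u2 -> ln u1 <> ln u2.
Proof. intros H1 H2 Hne He. apply Hne. apply ln_inv; auto. Qed.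

Definition bigI (u1 u2 : R) := Rabs (ln u1) + Rabs (ln u2) + 1.

Lemma ineq3 nu u1 u2 : 0 < u1 -> 0 < u2 ->
  le_eq_iff (sqrt (BesselK nu u1 * BesselK nu u2)) (BesselK nu (sqrt (u1 * u2))) u1 u2.
Proof.
  intros H1 H2. rewrite !BK_fun.
  pose proof (K0p nu u1 H1). pose proof (K0p nu u2 H2).
  apply le_eq_of.
  - intros Hne.
    pose proof (Rle_abs (ln u1)); pose proof (Rle_abs (ln u2)).
    pose proof (Rabs_pos (ln u1)); pose proof (Rabs_pos (ln u2)).
    pose proof (Rle_abs (- ln u1)); pose proof (Rle_abs (- ln u2)). rewrite Rabs_Ropp in H7, H8.
    assert (Hm : (fun x => - ln (Kk nu 0 (exp x))) ((ln u1 + ln u2) / 2) <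
        ((fun x => - ln (Kk nu 0 (exp x))) (ln u1) + (fun x => - ln (Kk nu 0 (exp x))) (ln u2)) / 2).
    { apply (midconv (fun x => - ln (Kk nu 0 (exp x))) (fun x => exp x * Kk nu 1 (exp x) / Kk nu 0 (exp x)) (- bigI u1 u2) (bigI u1 u2));
        unfold bigI; try lra; auto.
      - apply ln_ne; auto.
      - intros x Hx. pose proof (exp_pos x). auto_derive. repeat split; try apply exK; try apply K0p; auto.
        rewrite DK by lra. field. apply K0ne; lra.
      - intros x y Hx Hxy Hy. pose proof (part_c nu (exp x) (exp y) (exp_pos x) (exp_increasing _ _ Hxy)).
        cbv beta in *; rewrite !dBK_eq, !BK_eq in H9 by apply exp_pos.
        replace (exp x * Kk nu 1 (exp x) / Kk nu 0 (exp x)) with (- (exp x * - Kk nu 1 (exp x) / Kk nu 0 (exp x))) by (unfold Rdiv; ring).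
        replace (exp y * Kk nu 1 (exp y) / Kk nu 0 (exp y)) with (- (exp y * - Kk nu 1 (exp y) / Kk nu 0 (exp y))) by (unfold Rdiv; ring).
        lra. }
    cbv beta in Hm. rewrite expmid, !exp_ln in Hm by auto.
    set (M := Kk nu 0 (sqrt (u1 * u2))) in *.
    assert (0 < M) by (apply K0p; apply sqrt_lt_R0; nra).
    set (A := Kk nu 0 u1) in *. set (B := Kk nu 0 u2) in *.
    assert (A * B < M * M).
    { apply ln_lt_inv. nra. nra. rewrite !ln_mult by lra. lra. }
    rewrite <- (sqrt_square M) by lra. apply sqrt_lt_1; nra.
  - intros <-. rewrite !sqrt_square; lra.
Qed.

Lemma ineq4 nu u1 u2 : 0 < u1 -> 0 < u2 ->
  le_eq_iff (BesselK nu (sqrt (u1 * u2))) ((BesselK nu u1 + BesselK nu u2) / 2) u1 u2.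
Proof.
  intros H1 H2. rewrite !BK_fun.
  apply le_eq_of.
  - intros Hne.
    pose proof (Rle_abs (ln u1)); pose proof (Rle_abs (ln u2)).
    pose proof (Rabs_pos (ln u1)); pose proof (Rabs_pos (ln u2)).
    pose proof (Rle_abs (- ln u1)); pose proof (Rle_abs (- ln u2)). rewrite Rabs_Ropp in H5, H6.
    assert (Hm : (fun x => Kk nu 0 (exp x)) ((ln u1 + ln u2) / 2) <
        ((fun x => Kk nu 0 (exp x)) (ln u1) + (fun x => Kk nu 0 (exp x)) (ln u2)) / 2).
    { apply (midconv (fun x => Kk nu 0 (exp x)) (fun x => exp x * - Kk nu 1 (exp x)) (- bigI u1 u2) (bigI u1 u2));
        unfold bigI; try lra; auto.
      - apply ln_ne; auto.
      - intros x Hx. pose proof (exp_pos x). auto_derive. repeat split; try apply exK; auto.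
        rewrite DK by lra. ring.
      - intros x y Hx Hxy Hy. pose proof (part_d nu (exp x) (exp y) (exp_pos x) (exp_increasing _ _ Hxy)).
        cbv beta in *; rewrite !dBK_eq in H7 by apply exp_pos. exact H7. }
    cbv beta in Hm. rewrite expmid, !exp_ln in Hm by auto. exact Hm.
  - intros <-. rewrite !sqrt_square; lra.
Qed.

Lemma ineq5 nu a hi u1 u2 : 0 <= a ->
  strict_incr_from a (fun u => u ^ 2 * dBesselK nu u) ->
  (forall x, 0 < x < hi -> a < / x) ->
  0 < u1 -> 0 < u2 -> / u1 < hi -> / u2 < hi ->
  le_eq_iff (BesselK nu (2 * u1 * u2 / (u1 + u2))) ((BesselK nu u1 + BesselK nu u2) / 2) u1 u2.
Proof.
  intros Ha Hinc Hx H1 H2 Hh1 Hh2. rewrite !BK_fun.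
  apply le_eq_of.
  - intros Hne.
    pose proof (Rinv_0_lt_compat _ H1); pose proof (Rinv_0_lt_compat _ H2).
    assert (Hm : (fun x => Kk nu 0 (/ x)) ((/ u1 + / u2) / 2) <
        ((fun x => Kk nu 0 (/ x)) (/ u1) + (fun x => Kk nu 0 (/ x)) (/ u2)) / 2).
    { apply (midconv (fun x => Kk nu 0 (/ x)) (fun x => Kk nu 1 (/ x) / x ^ 2) 0 hi); try lra; auto.
      - intros He. apply Hne. rewrite <- (Rinv_inv u1), <- (Rinv_inv u2), He. auto.
      - intros x Hx0. pose proof (Hx x Hx0). assert (0 < / x) by lra. auto_derive.
        repeat split; try apply exK; auto; apply Rgt_not_eq; lra.
        rewrite DK by lra. field. lra.
      - intros x y Hx0 Hxy Hy.
        assert (0 < x) by lra.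
        pose proof (Hx y ltac:(lra)).
        assert (/ y < / x) by (apply Rinv_lt_contravar; nra).
        pose proof (Hinc (/ y) (/ x) H4 H5) as H7.
        cbv beta in *; rewrite !dBK_eq in H7 by lra.
        replace (Kk nu 1 (/ x) / x ^ 2) with (- ((/ x) ^ 2 * - Kk nu 1 (/ x))) by (field; lra).
        replace (Kk nu 1 (/ y) / y ^ 2) with (- ((/ y) ^ 2 * - Kk nu 1 (/ y))) by (field; lra).
        lra. }
    cbv beta in Hm. rewrite !Rinv_inv in Hm.
    replace (/ ((/ u1 + / u2) / 2)) with (2 * u1 * u2 / (u1 + u2)) in Hm by (field; lra).
    exact Hm.
  - intros <-. replace (2 * u1 * u1 / (u1 + u1)) with u1 by (field; lra). field.
Qed.

Theorem theorem2 :
  (* (a) *)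
  (forall nu, 1 <= Rabs nu ->
     strict_decr_from 0 (fun u => dBesselK nu u / (BesselK nu u) ^ 2)) /\
  (* (b) *)
  (forall nu, strict_incr_from 0 (fun u => dBesselK nu u / BesselK nu u)) /\
  (* (c) *)
  (forall nu, strict_decr_from 0 (fun u => u * dBesselK nu u / BesselK nu u)) /\
  (* (d) *)
  (forall nu, strict_incr_from 0 (fun u => u * dBesselK nu u)) /\
  (* (e) *)
  (forall nu, 5 / 4 <= Rabs nu ->
     strict_incr_from 0 (fun u => u ^ 2 * dBesselK nu u)) /\
  (* (f) *)
  (forall nu, strict_incr_from 2 (fun u => u ^ 2 * dBesselK nu u)) /\
  (* first inequality of the chain, |nu| >= 1 *)
  (forall nu u1 u2, 1 <= Rabs nu -> 0 < u1 -> 0 < u2 ->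
     le_eq_iff (2 * BesselK nu u1 * BesselK nu u2 / (BesselK nu u1 + BesselK nu u2))
               (BesselK nu ((u1 + u2) / 2)) u1 u2) /\
  (* second, third and fourth inequalities, all real nu *)
  (forall nu u1 u2, 0 < u1 -> 0 < u2 ->
     le_eq_iff (BesselK nu ((u1 + u2) / 2))
               (sqrt (BesselK nu u1 * BesselK nu u2)) u1 u2 /\
     le_eq_iff (sqrt (BesselK nu u1 * BesselK nu u2))
               (BesselK nu (sqrt (u1 * u2))) u1 u2 /\
     le_eq_iff (BesselK nu (sqrt (u1 * u2)))
               ((BesselK nu u1 + BesselK nu u2) / 2) u1 u2) /\
  (* harmonic-mean inequality, |nu| >= 5/4 *)
  (forall nu u1 u2, 5 / 4 <= Rabs nu -> 0 < u1 -> 0 < u2 ->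
     le_eq_iff (BesselK nu (2 * u1 * u2 / (u1 + u2)))
               ((BesselK nu u1 + BesselK nu u2) / 2) u1 u2) /\
  (* harmonic-mean inequality, all nu, u1, u2 > 2 *)
  (forall nu u1 u2, 2 < u1 -> 2 < u2 ->
     le_eq_iff (BesselK nu (2 * u1 * u2 / (u1 + u2)))
               ((BesselK nu u1 + BesselK nu u2) / 2) u1 u2).
Proof.
  split. { intros nu H. apply part_a; auto. }
  split. { apply part_b. }
  split. { apply part_c. }
  split. { apply part_d. }
  split. { apply part_e. }
  split. { apply part_f. }
  split. { intros; apply ineq1; auto. }
  split. { intros nu u1 u2 H1 H2. split. apply ineq2; auto. split. apply ineq3; auto. apply ineq4; auto. }
  split.
  { intros nu u1 u2 Hnu H1 H2.
    pose proof (Rinv_0_lt_compat _ H1); pose proof (Rinv_0_lt_compat _ H2).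
    apply (ineq5 nu 0 (/ u1 + / u2 + 1)); auto; try lra.
    apply part_e; auto.
    intros x Hx. apply Rinv_0_lt_compat; lra. }
  { intros nu u1 u2 H1 H2.
    apply (ineq5 nu 2 (1/2)); auto; try lra.
    apply part_f.
    intros x Hx. replace 2 with (/ (1/2)) by field. apply Rinv_lt_contravar; nra.
    replace (1/2) with (/ 2) by field. apply Rinv_lt_contravar; lra.
    replace (1/2) with (/ 2) by field. apply Rinv_lt_contravar; lra. }
Qed.
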